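(* Let $H=\operatorname{diag}(\lambda_1,\dots,\lambda_n)$ with $\lambda_1\ge\dots\ge\lambda_{n-p}\ge0>\lambda_{n-p+1}\ge\dots\ge\lambda_n$ for some $1\le p<n$, let $f(x)=\frac12x^THx$, and let $L=\max(\lambda_1,-\lambda_n)$. Let $0<\alpha<1/L$, let $\gamma_k\in[0,1]$ and $\beta_k\in[0,1]$ for $k\ge1$, and generate iterates by choosing $x^1\in\mathbb{R}^n$, setting $x^0=x^1$, and for $k=1,2,\dots$ \[ y^k=x^k+\gamma_k(x^k-x^{k-1}),\qquad x^{k+1}=x^k+\beta_k(x^k-x^{k-1})-\alpha\nabla f(y^k). \] Then for every $i$ with $\lambda_i<0$ and every $k\ge0$, \[ x_i^{k+1}=x_i^0\prod_{m=0}^k(1+b_{i,m}), \] where $b_{i,0}=0$ and, for $k\ge1$, \[ b_{i,k}=(\beta_k+\gamma_k\alpha|\lambda_i|)\Big(1-\frac{1}{1+b_{i,k-1}}\Big)+\alpha|\lambda_i|. \] In addition, if $\gamma_{k+1}\ge\gamma_k$ and $\beta_{k+1}\ge\beta_k$ for all $k$, then $b_{i,k+1}\ge b_{i,k}$ for $k=1,2,\dots$.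
   Context: Here $x_i^k$ denotes the $i$-th component of $x^k$. The iteration is a general accelerated gradient framework: $\gamma_k=\beta_k=0$ gives gradient descent, $\gamma_k=0$ gives heavy-ball, $\gamma_k=\beta_k$ gives Nesterov-type accelerated gradient. *)

(* Defs.v *)
From HB Require Import structures.
From mathcomp Require Import all_boot all_order all_algebra.
Set Implicit Arguments. Unset Strict Implicit. Unset Printing Implicit Defensive.
Import Order.TTheory GRing.Theory Num.Theory.
Local Open Scope ring_scope.

Section Defs.
Variable R : realFieldType.

(* H = diag(lambda_1, ..., lambda_n), indices 0-based: lam i = lambda_{i+1}. *)
Definition diagH n (lam : 'I_n -> R) : 'M[R]_n := diag_mx (\row_i lam i).

Definition quad_f n (H : 'M[R]_n) (x : 'cV[R]_n) : R := 2^-1 * (x^T *m H *m x) 0 0.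

(* gradient of f(x) = 1/2 x^T H x for symmetric H: grad f(y) = H y *)
Definition grad_quad n (H : 'M[R]_n) (y : 'cV[R]_n) : 'cV[R]_n := H *m y.

(* component i of v, for i given as a natural number (0-based); 0 if out of range *)
Definition comp n (v : 'I_n -> R) (i : nat) : R :=
  if insub i is Some j then v j else 0.

Definition Lconst n (lam : 'I_n -> R) : R := Num.max (comp lam 0) (- comp lam n.-1).

Fixpoint bcoef (alpha a : R) (beta gamma : nat -> R) (k : nat) : R :=
  match k with
  | 0 => 0
  | k'.+1 => (beta k'.+1 + gamma k'.+1 * alpha * a) * (1 - 1 / (1 + bcoef alpha a beta gamma k'))
             + alpha * a
  end.
End Defs.

(* Main.v *)
Require Import Defs.
From HB Require Import structures.
From mathcomp Require Import all_boot all_order all_algebra.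
From mathcomp Require Import ring lra.
Import Order.TTheory GRing.Theory Num.Theory.
Local Open Scope ring_scope.

Lemma bcoef_ge0 (R : realFieldType) (alpha a : R) beta gamma :
  0 <= alpha -> 0 <= a ->
  (forall k, (1 <= k)%N -> 0 <= gamma k <= 1) ->
  (forall k, (1 <= k)%N -> 0 <= beta k <= 1) ->
  forall m, 0 <= bcoef alpha a beta gamma m.
Proof.
move=> ha0 a0 hg hb; elim=> [|m IH] /=; first by [].
have /andP[g0 _] := hg m.+1 isT; have /andP[b0 _] := hb m.+1 isT.
have hp : 0 < 1 + bcoef alpha a beta gamma m by lra.
have -> : 1 - 1 / (1 + bcoef alpha a beta gamma m) =
   bcoef alpha a beta gamma m / (1 + bcoef alpha a beta gamma m).
  by field; rewrite gt_eqF.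
apply: addr_ge0; last exact: mulr_ge0.
apply: mulr_ge0; first by apply: addr_ge0 => //; do 2 apply: mulr_ge0 => //.
by apply: divr_ge0 => //; apply: ltW.
Qed.
Theorem theorem4p1 (R : realFieldType) (n p : nat) (lam : 'I_n -> R)
  (hp1 : (1 <= p)%N) (hpn : (p < n)%N)
  (hsort : forall i j : 'I_n, (i <= j)%N -> lam j <= lam i)
  (hnonneg : forall i : 'I_n, (i < n - p)%N -> 0 <= lam i)
  (hneg : forall i : 'I_n, (n - p <= i)%N -> lam i < 0)
  (alpha : R) (halpha0 : 0 < alpha) (halphaL : alpha < 1 / Lconst lam)
  (gamma beta : nat -> R)
  (hgamma : forall k, (1 <= k)%N -> 0 <= gamma k <= 1)
  (hbeta : forall k, (1 <= k)%N -> 0 <= beta k <= 1)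
  (x y : nat -> 'cV[R]_n)
  (hx0 : x 0%N = x 1%N)
  (hy : forall k, (1 <= k)%N -> y k = x k + gamma k *: (x k - x k.-1))
  (hx : forall k, (1 <= k)%N ->
     x k.+1 = x k + beta k *: (x k - x k.-1) - alpha *: grad_quad (diagH lam) (y k)) :
  (forall i : 'I_n, lam i < 0 -> forall k : nat,
     x k.+1 i 0 = x 0%N i 0 * \prod_(m < k.+1) (1 + bcoef alpha `|lam i| beta gamma m))
  /\
  ((forall k, (1 <= k)%N -> gamma k <= gamma k.+1) ->
   (forall k, (1 <= k)%N -> beta k <= beta k.+1) ->
   forall i : 'I_n, lam i < 0 -> forall k : nat, (1 <= k)%N ->
     bcoef alpha `|lam i| beta gamma k <= bcoef alpha `|lam i| beta gamma k.+1).
Proof.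
split.
  move=> i hi.
  have ha : `|lam i| = - lam i by rewrite ltr0_norm.
  set B := bcoef alpha `|lam i| beta gamma.
  have B0 : forall m, 0 <= B m.
    by apply: bcoef_ge0 => //; exact: ltW.
  have rec : forall k, x k.+2 i 0 = x k.+1 i 0
       + (beta k.+1 + gamma k.+1 * alpha * `|lam i|) * (x k.+1 i 0 - x k i 0)
       + alpha * `|lam i| * x k.+1 i 0.
    move=> k; rewrite (hx k.+1 isT) (hy k.+1 isT) /grad_quad /diagH mul_diag_mx /=.
    rewrite !mxE ha; ring.
  suff H : forall k, x k.+1 i 0 = x 0%N i 0 * \prod_(m < k.+1) (1 + B m)
                /\ x k i 0 = x 0%N i 0 * \prod_(m < k) (1 + B m).
    by move=> k; case: (H k).
  elim=> [|k [IH1 IH2]].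
    by rewrite big_ord_recr !big_ord0 /= -hx0 /B /= addr0 !mul1r mulr1.
  split; last by [].
  rewrite rec IH1 IH2 [in RHS]big_ord_recr big_ord_recr /=.
  rewrite /B /=. fold B.
  have hp : 1 + B k != 0 by apply: lt0r_neq0; have := B0 k; lra.
  by field.
move=> hgm hbm i hi.
set a := `|lam i|.
have a0 : 0 <= a := normr_ge0 _.
set B := bcoef alpha a beta gamma.
have B0 : forall m, 0 <= B m.
  by apply: bcoef_ge0 => //; exact: ltW.
have gE : forall m, 1 - 1 / (1 + B m) = B m / (1 + B m).
  move=> m; have := B0 m => h; field; apply: lt0r_neq0; lra.
suff H : forall k, B k <= B k.+1 by move=> k _; exact: H.
elim=> [|k IH].
  rewrite /B /= -/B.
  have := B0 1%N; rewrite /B /=; lra.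
have BS m : B m.+1 = (beta m.+1 + gamma m.+1 * alpha * a) * (B m / (1 + B m)) + alpha * a.
  by rewrite -gE.
rewrite (BS k.+1) {1}(BS k).
rewrite lerD2r.
have c0 : 0 <= beta k.+1 + gamma k.+1 * alpha * a.
  have /andP[g0 _] := hgamma k.+1 isT; have /andP[b0 _] := hbeta k.+1 isT.
  by apply: addr_ge0 => //; do 2 apply: mulr_ge0 => //; exact: ltW.
have cle : beta k.+1 + gamma k.+1 * alpha * a <= beta k.+2 + gamma k.+2 * alpha * a.
  apply: lerD; first exact: hbm.
  have := hgm k.+1 isT; have := mulr_ge0 (ltW halpha0) a0; nra.
have gle : B k / (1 + B k) <= B k.+1 / (1 + B k.+1).
  have h1 := B0 k; have h2 := B0 k.+1.
  rewrite ler_pdivrMr; last lra.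
  rewrite mulrAC ler_pdivlMr; last lra.
  nra.
apply: (le_trans (ler_wpM2l c0 gle)).
have : 0 <= B k.+1 / (1 + B k.+1).
  by apply: divr_ge0 => //; have := B0 k.+1; lra.
move=> hg; exact: (ler_wpM2r hg cle).
Qed.
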